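(* Let $C$ be a conformal algebra satisfying a pseudo-identity $\sum_{\sigma\in S_n}(\sigma\otimes_H\mathrm{id}_C)\,t^*_\sigma(a_{1\sigma},\dots,a_{n\sigma})=0$ for all $a_1,\dots,a_n\in C$ (where each $t_\sigma$ is a linear combination of bracketings of an $n$-letter word). Let $\pi=(m_1,\dots,m_n)$ be positive integers, $G_i\in H^{\otimes m_i}$, $a_i\in C$ and $A_i=G_i\otimes_H a_i\in H^{\otimes m_i}\otimes_H C$. Then, for the expanded pseudoproduct, $$\sum_{\sigma\in S_n}(\sigma_\pi\otimes_H\mathrm{id}_C)\,t^*_\sigma(A_{1\sigma},\dots,A_{n\sigma})=0,$$ where $\sigma_\pi\in S_{m_1+\cdots+m_n}$ is the permutation with $\sigma_\pi\big((\Delta^{(m_{1\sigma})}\otimes\cdots\otimes\Delta^{(m_{n\sigma})})(F)\big)=(\Delta^{(m_1)}\otimes\cdots\otimes\Delta^{(m_n)})(\sigma(F))$ for all $F\in H^{\otimes n}$, i.e. $\sigma_\pi$ permutes the consecutive blocks of tensor factors (the $k$-th block having length $m_{k\sigma}$) by moving the $k$-th block to block position $k\sigma$, preserving order within blocks.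
   Context: $\Bbbk$ is a field of characteristic $0$, $H=\Bbbk[D]$ with Hopf structure $\Delta(D)=D\otimes1+1\otimes D$, $\varepsilon(D)=0$, $S(D)=-D$; iterated coproduct $\Delta^{(1)}=\mathrm{id}$, $\Delta^{(k+1)}=(\mathrm{id}\otimes\Delta^{(k)})\Delta$; $H$ acts on $H^{\otimes n}$ from the right by $(f_1\otimes\cdots\otimes f_n)h=f_1h_{(1)}\otimes\cdots\otimes f_nh_{(n)}$ and $H^{\otimes n}\otimes_H M$ is taken w.r.t. this action. A conformal algebra is a unital left $H$-module $C$ with bilinear operations $a_{(n)}b$ ($n\ge0$) such that $a_{(n)}b=0$ for $n\gg0$, $(Da)_{(n)}b=-na_{(n-1)}b$, $a_{(n)}(Db)=D(a_{(n)}b)+na_{(n-1)}b$. Pseudoproduct $a*b=\sum_{s\ge0}\frac{(-D)^s}{s!}\otimes1\otimes_H(a_{(s)}b)$; expanded pseudoproduct: if $a*b=\sum_i f_i\otimes g_i\otimes_H c_i$ then $(F\otimes_H a)*(G\otimes_H b)=\sum_iF\Delta^{(n)}(f_i)\otimes G\Delta^{(m)}(g_i)\otimes_H c_i$ for $F\in H^{\otimes n},G\in H^{\otimes m}$. For a bracketing $t$ and arguments $B_i\in H^{\otimes m_i}\otimes_HC$, $t^*(B_1,\dots,B_n)$ is obtained by replacing each product by the expanded pseudoproduct (elements $a\in C$ are regarded as $1\otimes_Ha$). $i\sigma$ denotes the image of $i$ under $\sigma$; for a permutation $\tau$ of tensor factors, $\tau\otimes_H\mathrm{id}_C$ is the induced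 map, where $\sigma\in S_n$ acts on $H^{\otimes n}$ by sending the $k$-th factor to position $k\sigma$. *)

(* Defs.v *)
From HB Require Import structures.
From mathcomp Require Import all_boot all_order fingroup perm all_algebra.
From Stdlib Require Import ClassicalEpsilon.
Set Implicit Arguments. Unset Strict Implicit. Unset Printing Implicit Defensive.
Import GRing.Theory.
Local Open Scope ring_scope.

(* H = k[D].  H^{(x)m} = k[x_1,...,x_m] (x_i = D in the i-th factor).
   An element of H^{(x)m} (x)_k C is represented as a formal finite sum
   [:: (e_1,c_1); ...] meaning  sum_j x^{e_j} (x) c_j  (e_j : exponent vector
   of length m; k-scalars are absorbed into the C-component). *)
Definition tens (C : Type) := seq (seq nat * C).

Definition coefs (k : fieldType) (C : lmodType k) (t : tens C) (e : seq nat) : C :=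
  \sum_(p <- t | p.1 == e) p.2.

Record conformal (k : fieldType) (C : lmodType k) := Conformal {
  cD : {linear C -> C};
  cprod : nat -> C -> C -> C;
  cprod_linl : forall n b, linear (fun a => cprod n a b);
  cprod_linr : forall n a, linear (cprod n a);
  cprod_loc : forall a b, exists N, forall n, (N <= n)%N -> cprod n a b = 0;
  cprodDl : forall n a b, cprod n (cD a) b = - (cprod n.-1 a b *+ n);
  cprodDr : forall n a b, cprod n a (cD b) = cD (cprod n a b) + cprod n.-1 a b *+ n
}.

(* binary bracketings *)
Inductive btree := BLeaf | BNode of btree & btree.
Fixpoint leaves (T : btree) : nat :=
  match T with BLeaf => 1 | BNode l r => leaves l + leaves r end.

Section Conf.
Variables (k : fieldType) (C : lmodType k) (cs : @conformal k C).

(* right action of D on H^{(x)m} (x) C in the first factor: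
   multiplication by Delta^{(m)}(D) = x_1 + ... + x_m *)
Definition actD (t : tens C) : tens C :=
  flatten [seq [seq (incr_nth p.1 i, p.2) | i <- iota 0 (size p.1)] | p <- t].

Definition act_hs (s : nat) (t : tens C) : tens C :=
  [seq (p.1, ((s`!%:R : k)^-1 * (-1) ^+ s) *: p.2) | p <- iter s actD t].

(* H^{(x)m} (x)_H C : t represents 0 iff t lies in the k-span of the
   relations  (x^e . D) (x) c - x^e (x) D c,  with |e| = m *)
Definition rel_gen (p : seq nat * C) : tens C :=
  [seq (incr_nth p.1 i, p.2) | i <- iota 0 (size p.1)] ++ [:: (p.1, - cD cs p.2)].

Definition tz (m : nat) (t : tens C) : Prop :=
  exists r : seq (seq nat * C), all (fun p => size p.1 == m) r /\
    forall e, coefs t e = coefs (flatten (map rel_gen r)) e.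

Definition cbound (a b : C) : nat :=
  proj1_sig (constructive_indefinite_description _ (cprod_loc cs a b)).

(* expanded pseudoproduct:
   (F (x) a) * (G (x) b) = sum_s F Delta((-D)^s/s!) (x) G (x)_H a_(s) b *)
Definition pprod (A B : tens C) : tens C :=
  flatten (flatten [seq [seq
     [seq (r.1 ++ q.1, r.2) | r <- act_hs s [:: (p.1, cprod cs s p.2 q.2)]]
       | s <- iota 0 (cbound p.2 q.2)] | p <- A, q <- B]).

Fixpoint teval (T : btree) (args : seq (tens C)) : tens C :=
  match T with
  | BLeaf => head [::] args
  | BNode l r => pprod (teval l (take (leaves l) args)) (teval r (drop (leaves l) args))
  end.

Definition tscale (a : k) (t : tens C) : tens C := [seq (p.1, a *: p.2) | p <- t].

Definition lceval (L : seq (k * btree)) (args : seq (tens C)) : tens C :=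
  flatten [seq tscale p.1 (teval p.2 args) | p <- L].

(* a in C regarded as 1 (x)_H a *)
Definition elt (a : C) : tens C := [:: ([:: 0%N], a)].

(* G (x)_H a for G in H^{(x)m} given as a list of (coefficient, exponent) *)
Definition gtens (G : seq (k * seq nat)) (a : C) : tens C :=
  [seq (p.2, p.1 *: a) | p <- G].
End Conf.

(* sigma in S_n acts on H^{(x)n} sending the k-th factor to position k sigma
   (k sigma := s k) : the exponent at position j of the result is the
   exponent at position (sigma^-1 j) of the argument *)
Definition act_perm (C : Type) (n : nat) (s : 'S_n) (t : tens C) : tens C :=
  [seq ([seq nth 0%N p.1 ((s^-1)%g j) | j <- enum 'I_n], p.2) | p <- t].

Fixpoint blocks (l : seq nat) (e : seq nat) : seq (seq nat) :=
  match l with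
  | [::] => [::]
  | x :: l' => take x e :: blocks l' (drop x e)
  end.

(* sigma_pi : the k-th block (of length m (k sigma)) is moved to block
   position k sigma, order inside blocks preserved *)
Definition act_sigma_pi (C : Type) (n : nat) (m : 'I_n -> nat) (s : 'S_n)
    (t : tens C) : tens C :=
  [seq (flatten [seq nth [::] (blocks [seq m (s i) | i <- enum 'I_n] p.1) ((s^-1)%g j)
                | j <- enum 'I_n], p.2) | p <- t].

(* Main.v *)
Require Import Defs.
From HB Require Import structures.
From mathcomp Require Import all_boot all_order fingroup perm all_algebra.
From Stdlib Require Import ClassicalEpsilon.
From mathcomp Require Import zify.
Set Implicit Arguments. Unset Strict Implicit. Unset Printing Implicit Defensive.
Import GRing.Theory.
Local Open Scope ring_scope.


Section Basic.
Variable k : fieldType.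

Definition eqv (V : lmodType k) (t u : tens V) := forall e, coefs t e = coefs u e.

Lemma coefsE (V : lmodType k) (t : tens V) e :
  coefs t e = \sum_(p <- t) (if p.1 == e then p.2 else 0).
Proof. by rewrite /coefs big_mkcond. Qed.

Lemma coefs_cat (V : lmodType k) (t u : tens V) e : coefs (t ++ u) e = coefs t e + coefs u e.
Proof. by rewrite /coefs big_cat. Qed.

Lemma coefs_flatten (V : lmodType k) (L : seq (tens V)) e :
  coefs (flatten L) e = \sum_(t <- L) coefs t e.
Proof. by rewrite /coefs big_flatten. Qed.

Lemma coefs_perm (V : lmodType k) (t u : tens V) : perm_eq t u -> eqv t u.
Proof. by move=> h e; rewrite /coefs (perm_big _ h). Qed.

Lemma eqv_refl (V : lmodType k) (t : tens V) : eqv t t. Proof. by []. Qed.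
Lemma eqv_sym (V : lmodType k) (t u : tens V) : eqv t u -> eqv u t.
Proof. by move=> h e; rewrite h. Qed.
Lemma eqv_trans (V : lmodType k) (t u w : tens V) : eqv t u -> eqv u w -> eqv t w.
Proof. by move=> h1 h2 e; rewrite h1 h2. Qed.

Lemma eqv_cat (V : lmodType k) (t t' u u' : tens V) :
  eqv t t' -> eqv u u' -> eqv (t ++ u) (t' ++ u').
Proof. by move=> h1 h2 e; rewrite !coefs_cat h1 h2. Qed.

Lemma eqv_flatten (V : lmodType k) I (s : seq I) (f g : I -> tens V) :
  (forall i, eqv (f i) (g i)) ->
  eqv (flatten (map f s)) (flatten (map g s)).
Proof.
move=> h e; rewrite !coefs_flatten !big_map; apply: eq_bigr => i _; exact: h.
Qed.

(* integrals of additive integrands depend only on coefs *)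
Section Integral.
Variables (V : lmodType k) (W : zmodType) (F : seq nat -> V -> W).
Hypothesis F0 : forall e, F e 0 = 0.
Hypothesis FD : forall e x y, F e (x + y) = F e x + F e y.

Lemma F_sum e I (r : seq I) (P : pred I) (g : I -> V) :
  F e (\sum_(i <- r | P i) g i) = \sum_(i <- r | P i) F e (g i).
Proof.
elim: r => [|i r IH]; first by rewrite !big_nil F0.
by rewrite !big_cons; case: (P i); rewrite ?FD IH.
Qed.

Lemma int_supp (t : tens V) (S : seq (seq nat)) :
  uniq S -> {subset map fst t <= S} ->
  \sum_(p <- t) F p.1 p.2 = \sum_(e <- S) F e (coefs t e).
Proof.
move=> uS; elim: t => [|p t IH] hsub.
  by rewrite big_nil; under eq_bigr do rewrite /coefs big_nil F0; rewrite big1.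
rewrite big_cons IH; last by move=> x hx; apply: hsub; rewrite inE hx orbT.
have hp : p.1 \in S by apply: hsub; rewrite inE eqxx.
rewrite (bigD1_seq p.1) //= [in RHS](bigD1_seq p.1) //= /coefs big_cons eqxx FD addrA.
congr (_ + _); apply: eq_bigr => e /negbTE he.
by rewrite big_cons eq_sym he.
Qed.

Lemma int_eqv (t u : tens V) : eqv t u ->
  \sum_(p <- t) F p.1 p.2 = \sum_(p <- u) F p.1 p.2.
Proof.
move=> h; set S := undup (map fst (t ++ u)).
have uS : uniq S by exact: undup_uniq.
rewrite (int_supp (S := S)) // ?(int_supp (t := u) (S := S)) //.
- by apply: eq_bigr => e _; rewrite h.
- by move=> x hx; rewrite mem_undup map_cat mem_cat hx orbT.
- by move=> x hx; rewrite mem_undup map_cat mem_cat hx.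
Qed.
End Integral.

Lemma eqv_pmap (V W : lmodType k) (f : seq nat -> V -> tens W) (t u : tens V) :
  (forall e e', coefs (f e 0) e' = 0) ->
  (forall e x y e', coefs (f e (x + y)) e' = coefs (f e x) e' + coefs (f e y) e') ->
  eqv t u -> eqv (flatten [seq f p.1 p.2 | p <- t]) (flatten [seq f p.1 p.2 | p <- u]).
Proof.
move=> h0 hD h e'; rewrite !coefs_flatten !big_map.
exact: (int_eqv (F := fun e x => coefs (f e x) e')).
Qed.

End Basic.


Section Tp.
Variable k : fieldType.

Definition tprod (V : lmodType k) (P : tens k^o) (Q : tens V) : tens V :=
  [seq (p.1 ++ q.1, p.2 *: q.2) | p <- P, q <- Q].

Lemma coefs_tprod (V : lmodType k) (P : tens k^o) (Q : tens V) e :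
  coefs (tprod P Q) e =
  \sum_(p <- P) \sum_(q <- Q) (if p.1 ++ q.1 == e then p.2 *: q.2 else 0).
Proof. by rewrite coefsE /tprod big_allpairs_dep. Qed.

Lemma tprod_eqvr (V : lmodType k) (P : tens k^o) (Q Q' : tens V) :
  eqv Q Q' -> eqv (tprod P Q) (tprod P Q').
Proof.
move=> h e; rewrite !coefs_tprod; apply: eq_bigr => p _.
apply: (int_eqv (F := fun f x => if p.1 ++ f == e then p.2 *: x else 0)) => //.
- by move=> f; case: ifP; rewrite ?scaler0.
- by move=> f x y; case: ifP; rewrite ?scalerDr ?addr0.
Qed.

Lemma tprod_eqvl (V : lmodType k) (P P' : tens k^o) (Q : tens V) :
  eqv P P' -> eqv (tprod P Q) (tprod P' Q).
Proof.
move=> h e; rewrite !coefs_tprod.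
apply: (int_eqv (F := fun f (x : k^o) => \sum_(q <- Q) if f ++ q.1 == e then x *: q.2 else 0)) => //.
- by move=> f; apply: big1 => q _; case: ifP; rewrite ?scale0r.
- move=> f x y; rewrite -big_split; apply: eq_bigr => q _.
  by case: ifP => _ /=; rewrite ?scalerDl ?addr0.
Qed.

Lemma tprod_cat_r (V : lmodType k) (P : tens k^o) (Q Q' : tens V) :
  eqv (tprod P (Q ++ Q')) (tprod P Q ++ tprod P Q').
Proof.
move=> e; rewrite coefs_cat !coefs_tprod -big_split; apply: eq_bigr => p _.
by rewrite big_cat.
Qed.

Lemma tprod_cat_l (V : lmodType k) (P P' : tens k^o) (Q : tens V) :
  eqv (tprod (P ++ P') Q) (tprod P Q ++ tprod P' Q).
Proof. by move=> e; rewrite coefs_cat !coefs_tprod big_cat. Qed.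

Lemma tprod_flatten_r (V : lmodType k) (P : tens k^o) (L : seq (tens V)) :
  eqv (tprod P (flatten L)) (flatten (map (tprod P) L)).
Proof.
move=> e; rewrite coefs_flatten coefs_tprod big_map.
rewrite (eq_bigr (fun p => \sum_(Q <- L) \sum_(q <- Q) (if p.1 ++ q.1 == e then p.2 *: q.2 else 0))); last first.
  by move=> p _; rewrite big_flatten.
rewrite exchange_big; apply: eq_bigr => Q _; by rewrite coefs_tprod.
Qed.

Lemma tprod_flatten_l (V : lmodType k) (L : seq (tens k^o)) (Q : tens V) :
  eqv (tprod (flatten L) Q) (flatten (map (fun P => tprod P Q) L)).
Proof.
move=> e; rewrite coefs_flatten coefs_tprod big_map big_flatten /=.
by apply: eq_bigr => P _; rewrite coefs_tprod.
Qed.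

Lemma tprod_assoc (V : lmodType k) (P Q : tens k^o) (R : tens V) :
  eqv (tprod P (tprod Q R)) (tprod (tprod P Q) R).
Proof.
move=> e; rewrite !coefs_tprod /tprod big_allpairs_dep /=.
apply: eq_bigr => p _; rewrite big_allpairs_dep /=.
apply: eq_bigr => q _; apply: eq_bigr => r _; by rewrite catA scalerA.
Qed.

Lemma actDE (V : lmodType k) (t : tens V) :
  actD t = flatten [seq [seq (incr_nth p.1 i, p.2) | i <- iota 0 (size p.1)] | p <- t].
Proof. by []. Qed.

Lemma coefs_actD (V : lmodType k) (t : tens V) e :
  coefs (actD t) e = \sum_(p <- t) \sum_(i <- iota 0 (size p.1))
      (if incr_nth p.1 i == e then p.2 else 0).
Proof. by rewrite actDE coefs_flatten big_map; apply: eq_bigr => p _; rewrite coefsE big_map. Qed.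

Lemma actD_eqv (V : lmodType k) (t u : tens V) : eqv t u -> eqv (actD t) (actD u).
Proof.
move=> h e; rewrite !coefs_actD.
apply: (int_eqv (F := fun f x => \sum_(i <- iota 0 (size f)) if incr_nth f i == e then x else 0)) => //.
try (by move=> f; apply: big1 => i _; case: ifP).
by move=> f x y; rewrite -big_split; apply: eq_bigr => i _; case: ifP => _ /=; rewrite ?addr0.
Qed.

Lemma actD_cat (V : lmodType k) (t u : tens V) : actD (t ++ u) = actD t ++ actD u.
Proof. by rewrite !actDE map_cat flatten_cat. Qed.

Lemma actD_flatten (V : lmodType k) (L : seq (tens V)) :
  actD (flatten L) = flatten (map (@actD k V) L).
Proof. by elim: L => //= t L IH; rewrite actD_cat IH. Qed.

Lemma incr_nth_catl (p q : seq nat) i : (i < size p)%N ->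
  incr_nth (p ++ q) i = incr_nth p i ++ q.
Proof. by elim: p i => [|x p IH] [|i] //= h; rewrite IH. Qed.

Lemma incr_nth_catr (p q : seq nat) i :
  incr_nth (p ++ q) (size p + i) = p ++ incr_nth q i.
Proof. by elim: p => //= x p IH; rewrite IH. Qed.

Lemma leibniz (V : lmodType k) (P : tens k^o) (Q : tens V) :
  eqv (actD (tprod P Q)) (tprod (actD P) Q ++ tprod P (actD Q)).
Proof.
move=> e; rewrite coefs_cat coefs_actD !coefs_tprod /tprod big_allpairs_dep /=.
rewrite actDE big_flatten /= big_map -big_split /=; apply: eq_bigr => p _.
rewrite big_map exchange_big /=.
rewrite (actDE Q) big_flatten /= big_map -big_split; apply: eq_bigr => q _ /=.
rewrite big_map size_cat iotaD big_cat /=; congr (_ + _).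
- rewrite big_seq_cond [RHS]big_seq_cond; apply: eq_bigr => i.
  rewrite andbT mem_iota /= => hi; by rewrite incr_nth_catl.
- rewrite add0n -[X in iota X](addn0 (size p.1)) iotaDl big_map /=.
  by apply: eq_bigr => i _; rewrite incr_nth_catr.
Qed.
End Tp.


Section Psi.
Variable k : fieldType.

Definition gk (G : seq (k * seq nat)) : tens k^o := [seq (p.2, p.1) | p <- G].

Fixpoint psi (Gs : seq (seq (k * seq nat))) (e : seq nat) : tens k^o :=
  if Gs is G :: Gs' then tprod (iter (head 0%N e) (@actD k k^o) (gk G)) (psi Gs' (behead e))
  else [:: ([::], 1)].

Definition sc (V : lmodType k) (P : tens k^o) (c : V) : tens V :=
  [seq (f.1, f.2 *: c) | f <- P].

Definition Phi (V : lmodType k) Gs (t : tens V) : tens V :=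
  flatten [seq sc (psi Gs p.1) p.2 | p <- t].

Lemma coefs_sc (V : lmodType k) (P : tens k^o) (c : V) e :
  coefs (sc P c) e = coefs P e *: c.
Proof.
rewrite !coefsE big_map scaler_suml; apply: eq_bigr => f _.
by case: ifP; rewrite ?scale0r.
Qed.

Lemma sc_eqv (V : lmodType k) (P P' : tens k^o) (c : V) : eqv P P' -> eqv (sc P c) (sc P' c).
Proof. by move=> h e; rewrite !coefs_sc h. Qed.

Lemma Phi_eqv (V : lmodType k) Gs (t u : tens V) : eqv t u -> eqv (Phi Gs t) (Phi Gs u).
Proof.
apply: (eqv_pmap (f := fun e x => sc (psi Gs e) x)).
- by move=> e e'; rewrite coefs_sc scaler0.
- by move=> e x y e'; rewrite !coefs_sc scalerDr.
Qed.

Lemma Phi_cat (V : lmodType k) Gs (t u : tens V) : Phi Gs (t ++ u) = Phi Gs t ++ Phi Gs u.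
Proof. by rewrite /Phi map_cat flatten_cat. Qed.

Lemma Phi_flatten (V : lmodType k) Gs (L : seq (tens V)) :
  Phi Gs (flatten L) = flatten (map (Phi Gs) L).
Proof. by elim: L => //= t L IH; rewrite Phi_cat IH. Qed.

Lemma eqv_flatten_in (V : lmodType k) (I : eqType) (s : seq I) (f g : I -> tens V) :
  (forall i, i \in s -> eqv (f i) (g i)) ->
  eqv (flatten (map f s)) (flatten (map g s)).
Proof.
move=> h e; rewrite !coefs_flatten !big_map; apply: eq_big_seq => i hi; exact: h.
Qed.

Lemma flatten_map_flatten (A B : Type) (g : A -> seq B) (L : seq (seq A)) :
  flatten (map g (flatten L)) = flatten (map (fun l => flatten (map g l)) L).
Proof. by elim: L => //= l L IH; rewrite map_cat flatten_cat IH. Qed.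

Lemma psi_actD Gs e : size e = size Gs ->
  eqv (actD (psi Gs e)) (flatten [seq psi Gs (incr_nth e i) | i <- iota 0 (size e)]).
Proof.
elim: Gs e => [|G Gs IH] [|e0 e] //= [he].
apply: eqv_trans (leibniz _ _) _.
apply: eqv_cat => //.
apply: eqv_trans (tprod_eqvr _ (IH _ he)) _.
apply: eqv_trans (tprod_flatten_r _ _) _.
rewrite [iota 1 _](iotaDl 1 0) -!map_comp.
move=> u; congr (coefs (flatten _) u); apply: eq_map => i /=.
Qed.

Definition expD (L : seq (seq nat)) : seq (seq nat) :=
  flatten [seq [seq incr_nth w i | i <- iota 0 (size w)] | w <- L].
Definition ex s (v : seq nat) := iter s expD [:: v].

Lemma size_ex s v h : h \in ex s v -> size h = size v.
Proof.
elim: s h => [|s IH] h /=; first by rewrite inE => /eqP ->.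
move=> /flattenP [l /mapP [w hw ->]] /mapP [i]; rewrite mem_iota add0n => /andP [_ hi] ->.
by rewrite size_incr_nth hi IH.
Qed.

Lemma actD_mapx (V : lmodType k) (L : seq (seq nat)) (x : V) :
  actD [seq (h, x) | h <- L] = [seq (h, x) | h <- expD L].
Proof.
rewrite actDE /expD map_flatten -!map_comp; congr flatten; apply: eq_map => w /=.
by rewrite -map_comp.
Qed.

Lemma iter_actD_ex (V : lmodType k) (P : tens V) s :
  iter s (@actD k V) P = flatten [seq [seq (h, f.2) | h <- ex s f.1] | f <- P].
Proof.
elim: s => [|s IH] /=.
  by elim: P => //= -[x y] P IH; rewrite -IH.
rewrite IH actD_flatten -map_comp; congr flatten; apply: eq_map => f /=.
by rewrite actD_mapx.
Qed.

Lemma psi_iter Gs e s : size e = size Gs ->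
  eqv (iter s (@actD k k^o) (psi Gs e)) (flatten [seq psi Gs h | h <- ex s e]).
Proof.
move=> he; elim: s => [|s IH] /=; first by move=> u; rewrite /= cats0.
apply: eqv_trans (actD_eqv IH) _.
rewrite actD_flatten -map_comp /expD flatten_map_flatten -map_comp.
apply: eqv_flatten_in => h hh /=.
rewrite -map_comp; apply: psi_actD; rewrite -he; exact: size_ex hh.
Qed.

Lemma actD_sc (V : lmodType k) (P : tens k^o) (c : V) : actD (sc P c) = sc (actD P) c.
Proof.
rewrite !actDE /sc map_flatten -!map_comp; congr flatten; apply: eq_map => f /=.
by rewrite -map_comp.
Qed.

Lemma sc_flatten (V : lmodType k) (L : seq (tens k^o)) (c : V) :
  sc (flatten L) c = flatten [seq sc P c | P <- L].
Proof. by elim: L => //= P L IH; rewrite /sc map_cat -IH. Qed.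

Lemma Phi_actD (V : lmodType k) Gs (t : tens V) :
  all (fun p => size p.1 == size Gs) t ->
  eqv (actD (Phi Gs t)) (Phi Gs (actD t)).
Proof.
move=> /allP ht; rewrite /Phi actD_flatten actDE flatten_map_flatten -!map_comp.
apply: eqv_flatten_in => p hp /=.
rewrite actD_sc -map_comp.
rewrite (eq_map (g := fun i => sc (psi Gs (incr_nth p.1 i)) p.2)) //.
rewrite (map_comp (fun P => sc P p.2) (fun i => psi Gs (incr_nth p.1 i))).
rewrite -sc_flatten; apply: sc_eqv.
apply: psi_actD; exact/eqP/ht.
Qed.

End Psi.


Section Conf.
Variables (k : fieldType) (C : lmodType k) (cs : @conformal k C).

Lemma lin_add (f : C -> C) : GRing.linear_for *:%R f -> forall x y, f (x + y) = f x + f y.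
Proof. by move=> h x y; have := h 1 x y; rewrite !scale1r. Qed.
Lemma lin_0 (f : C -> C) : GRing.linear_for *:%R f -> f 0 = 0.
Proof.
move=> h; have := lin_add h 0 0; rewrite addr0 => /eqP.
by rewrite eq_sym -subr_eq0 addrK => /eqP.
Qed.
Lemma lin_scale (f : C -> C) : GRing.linear_for *:%R f -> forall a x, f (a *: x) = a *: f x.
Proof. by move=> h a x; have := h a x 0; rewrite addr0 (lin_0 h) addr0. Qed.

Lemma cprod_addl n x y b : cprod cs n (x + y) b = cprod cs n x b + cprod cs n y b.
Proof. exact: (lin_add (cprod_linl cs n b)). Qed.
Lemma cprod_addr n a x y : cprod cs n a (x + y) = cprod cs n a x + cprod cs n a y.
Proof. exact: (lin_add (cprod_linr cs n a)). Qed.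
Lemma cprod_0l n b : cprod cs n 0 b = 0.
Proof. exact: (lin_0 (cprod_linl cs n b)). Qed.
Lemma cprod_0r n a : cprod cs n a 0 = 0.
Proof. exact: (lin_0 (cprod_linr cs n a)). Qed.
Lemma cprod_scalel n c x b : cprod cs n (c *: x) b = c *: cprod cs n x b.
Proof. exact: (lin_scale (cprod_linl cs n b)). Qed.
Lemma cprod_scaler n c a x : cprod cs n a (c *: x) = c *: cprod cs n a x.
Proof. exact: (lin_scale (cprod_linr cs n a)). Qed.
Lemma cD_scale c x : cD cs (c *: x) = c *: cD cs x.
Proof. by rewrite linearZ. Qed.

Lemma cbound_spec a b n : (cbound cs a b <= n)%N -> cprod cs n a b = 0.
Proof.
rewrite /cbound; case: (constructive_indefinite_description _ _) => N hN /=; exact: hN.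
Qed.

Lemma trunc (W : zmodType) (g : nat -> C -> W) (a b : C) N :
  (forall s, g s 0 = 0) -> (cbound cs a b <= N)%N ->
  \sum_(s <- iota 0 (cbound cs a b)) g s (cprod cs s a b) =
  \sum_(s <- iota 0 N) g s (cprod cs s a b).
Proof.
move=> g0 hN; rewrite -(subnKC hN) iotaD big_cat /= add0n.
rewrite [X in _ = _ + X]big1_seq ?addr0 // => s /andP [_]; rewrite mem_iota => /andP [h _].
by rewrite cbound_spec.
Qed.

Definition lam (s : nat) : k := (s`!%:R)^-1 * (-1) ^+ s.

Lemma act_hs1 s v (x : C) : act_hs s [:: (v, x)] = [seq (h, lam s *: x) | h <- ex s v].
Proof. by rewrite /act_hs iter_actD_ex /= cats0 -map_comp. Qed.

Lemma pprod_int (W : zmodType) (F : seq nat -> C -> W) (A B : tens C) :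
  \sum_(P <- pprod cs A B) F P.1 P.2 =
  \sum_(p <- A) \sum_(q <- B) \sum_(s <- iota 0 (cbound cs p.2 q.2))
     \sum_(h <- ex s p.1) F (h ++ q.1) (lam s *: cprod cs s p.2 q.2).
Proof.
rewrite /pprod big_flatten /= big_flatten /= big_allpairs_dep /=.
apply: eq_bigr => p _; apply: eq_bigr => q _; rewrite big_map.
apply: eq_bigr => s _; by rewrite act_hs1 -map_comp big_map.
Qed.

Lemma coefs_pprod (A B : tens C) e :
  coefs (pprod cs A B) e =
  \sum_(p <- A) \sum_(q <- B) \sum_(s <- iota 0 (cbound cs p.2 q.2))
     \sum_(h <- ex s p.1) (if h ++ q.1 == e then lam s *: cprod cs s p.2 q.2 else 0).
Proof. by rewrite coefsE (pprod_int (fun f x => if f == e then x else 0)). Qed.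

Section Add.
Variables (W : zmodType) (g : nat -> C -> W).
Hypothesis g0 : forall s, g s 0 = 0.
Hypothesis gD : forall s x y, g s (x + y) = g s x + g s y.

Lemma tsum_addl x y b :
  \sum_(s <- iota 0 (cbound cs (x + y) b)) g s (cprod cs s (x + y) b) =
  \sum_(s <- iota 0 (cbound cs x b)) g s (cprod cs s x b) +
  \sum_(s <- iota 0 (cbound cs y b)) g s (cprod cs s y b).
Proof.
set N := (cbound cs (x + y) b + cbound cs x b + cbound cs y b)%N.
rewrite !(@trunc _ _ _ _ N) //; try by rewrite /N; lia.
by rewrite -big_split; apply: eq_bigr => s _; rewrite cprod_addl gD.
Qed.

Lemma tsum_addr a x y :
  \sum_(s <- iota 0 (cbound cs a (x + y))) g s (cprod cs s a (x + y)) =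
  \sum_(s <- iota 0 (cbound cs a x)) g s (cprod cs s a x) +
  \sum_(s <- iota 0 (cbound cs a y)) g s (cprod cs s a y).
Proof.
set N := (cbound cs a (x + y) + cbound cs a x + cbound cs a y)%N.
rewrite !(@trunc _ _ _ _ N) //; try by rewrite /N; lia.
by rewrite -big_split; apply: eq_bigr => s _; rewrite cprod_addr gD.
Qed.

Lemma tsum_0l b : \sum_(s <- iota 0 (cbound cs 0 b)) g s (cprod cs s 0 b) = 0.
Proof. by apply: big1 => s _; rewrite cprod_0l g0. Qed.
Lemma tsum_0r a : \sum_(s <- iota 0 (cbound cs a 0)) g s (cprod cs s a 0) = 0.
Proof. by apply: big1 => s _; rewrite cprod_0r g0. Qed.

Lemma tsum_scale c d x y :
  \sum_(s <- iota 0 (cbound cs (c *: x) (d *: y))) g s (cprod cs s (c *: x) (d *: y)) =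
  \sum_(s <- iota 0 (cbound cs x y)) g s ((c * d) *: cprod cs s x y).
Proof.
set N := (cbound cs (c *: x) (d *: y) + cbound cs x y)%N.
rewrite (@trunc _ _ _ _ N) //; last by rewrite /N; lia.
rewrite (@trunc _ (fun s z => g s ((c * d) *: z)) _ _ N) //; last by rewrite /N; lia.
  by apply: eq_bigr => s _; rewrite cprod_scalel cprod_scaler scalerA mulrC.
by move=> s; rewrite scaler0.
Qed.
End Add.

Lemma pprod_eqvl (A A' B : tens C) : eqv A A' -> eqv (pprod cs A B) (pprod cs A' B).
Proof.
move=> hh e; rewrite !coefs_pprod.
apply: (int_eqv (F := fun v x => \sum_(q <- B) \sum_(s <- iota 0 (cbound cs x q.2))
     \sum_(h <- ex s v) (if h ++ q.1 == e then lam s *: cprod cs s x q.2 else 0))) => //.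
- move=> v; apply: big1 => q _.
  apply: (tsum_0l (g := fun s z => \sum_(h <- ex s v) (if h ++ q.1 == e then lam s *: z else 0))).
  by move=> s; apply: big1 => h _; case: ifP; rewrite ?scaler0.
- move=> v x y; rewrite -big_split; apply: eq_bigr => q _ /=.
  apply: (tsum_addl (g := fun s z => \sum_(h <- ex s v) (if h ++ q.1 == e then lam s *: z else 0))).
  + by move=> s; apply: big1 => h _; case: ifP; rewrite ?scaler0.
  + move=> s z z'; rewrite -big_split; apply: eq_bigr => h _ /=.
    by case: ifP; rewrite ?scalerDr ?addr0.
Qed.

Lemma pprod_eqvr (A B B' : tens C) : eqv B B' -> eqv (pprod cs A B) (pprod cs A B').
Proof.
move=> hh e; rewrite !coefs_pprod exchange_big [RHS]exchange_big /=.
apply: (int_eqv (F := fun w y => \sum_(p <- A) \sum_(s <- iota 0 (cbound cs p.2 y))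
     \sum_(h <- ex s p.1) (if h ++ w == e then lam s *: cprod cs s p.2 y else 0))) => //.
- move=> w; apply: big1 => p _.
  apply: (tsum_0r (g := fun s z => \sum_(h <- ex s p.1) (if h ++ w == e then lam s *: z else 0))).
  by move=> s; apply: big1 => h _; case: ifP; rewrite ?scaler0.
- move=> w x y; rewrite -big_split; apply: eq_bigr => p _ /=.
  apply: (tsum_addr (g := fun s z => \sum_(h <- ex s p.1) (if h ++ w == e then lam s *: z else 0))).
  + by move=> s; apply: big1 => h _; case: ifP; rewrite ?scaler0.
  + move=> s z z'; rewrite -big_split; apply: eq_bigr => h _ /=.
    by case: ifP; rewrite ?scalerDr ?addr0.
Qed.

End Conf.


Section Hom.
Variables (k : fieldType) (C : lmodType k) (cs : @conformal k C).

Lemma psi_split (Gs1 Gs2 : seq (seq (k * seq nat))) h w : size h = size Gs1 ->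
  eqv (psi (Gs1 ++ Gs2) (h ++ w)) (tprod (psi Gs1 h) (psi Gs2 w)).
Proof.
elim: Gs1 h => [|G Gs1 IH] [|h0 h] //=.
  move=> _ u; rewrite coefs_tprod big_cons big_nil addr0 coefsE.
  by apply: eq_bigr => q _; rewrite scale1r.
move=> [hs]; apply: eqv_trans (tprod_eqvr _ (IH _ hs)) _.
exact: tprod_assoc.
Qed.

Lemma Kv (Gs : seq (seq (k * seq nat))) s v w u : size v = size Gs ->
  \sum_(f <- psi Gs v) \sum_(h <- ex s f.1) (if h ++ w == u then f.2 else 0) =
  \sum_(h <- ex s v) \sum_(f <- psi Gs h) (if f.1 ++ w == u then f.2 else 0).
Proof.
move=> hv.
have e1 := iter_actD_ex (psi Gs v) s.
transitivity (\sum_(P <- iter s (@actD k k^o) (psi Gs v)) (if P.1 ++ w == u then P.2 else 0)).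
  by rewrite e1 big_flatten big_map; apply: eq_bigr => f _; rewrite big_map.
rewrite (int_eqv (F := fun e (x : k^o) => if e ++ w == u then x else 0) _ _ (psi_iter s hv)).
- by rewrite big_flatten big_map.
- by move=> e; case: ifP.
- by move=> e x y; case: ifP => //; rewrite addr0.
Qed.

Lemma coefs_Phi (V : lmodType k) (Gs : seq (seq (k * seq nat))) (t : tens V) u :
  coefs (Phi Gs t) u = \sum_(p <- t) coefs (psi Gs p.1) u *: p.2.
Proof. by rewrite /Phi coefs_flatten big_map; apply: eq_bigr => p _; rewrite coefs_sc. Qed.

Lemma pprod_hom (Gs1 Gs2 : seq (seq (k * seq nat))) (X Y : tens C) :
  all (fun p => size p.1 == size Gs1) X ->
  eqv (pprod cs (Phi Gs1 X) (Phi Gs2 Y)) (Phi (Gs1 ++ Gs2) (pprod cs X Y)).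
Proof.
move=> /allP hX u.
pose T := \sum_(p <- X) \sum_(q <- Y) \sum_(s <- iota 0 (cbound cs p.2 q.2))
   \sum_(g <- psi Gs2 q.1)
   (\sum_(f <- psi Gs1 p.1) \sum_(h <- ex s f.1) (if h ++ g.1 == u then f.2 else 0))
     *: (g.2 *: (lam k s *: cprod cs s p.2 q.2)).
transitivity T.
  rewrite coefs_pprod /Phi big_flatten big_map /T; apply: eq_bigr => p hp.
  rewrite /sc big_map exchange_big big_flatten big_map; apply: eq_bigr => q _ /=.
  rewrite big_map.
  transitivity (\sum_(g <- psi Gs2 q.1) \sum_(f <- psi Gs1 p.1) \sum_(s <- iota 0 (cbound cs p.2 q.2))
     \sum_(h <- ex s f.1) (if h ++ g.1 == u then lam k s *: ((f.2 * g.2) *: cprod cs s p.2 q.2) else 0)).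
    apply: eq_bigr => g _; apply: eq_bigr => f _ /=.
    apply: (@tsum_scale _ _ cs _ (fun s z => \sum_(h <- ex s f.1) (if h ++ g.1 == u then lam k s *: z else 0))).
    by move=> s; apply: big1 => h _; case: ifP; rewrite ?scaler0.
  rewrite [RHS]exchange_big /=; apply: eq_bigr => g _.
  rewrite [LHS]exchange_big /=; apply: eq_bigr => s _.
  rewrite scaler_suml; apply: eq_bigr => f _; rewrite scaler_suml; apply: eq_bigr => h _.
  case: ifP => _; last by rewrite scale0r.
  by rewrite !scalerA; congr (_ *: _); rewrite mulrC mulrA.
move: (pprod_int cs (fun e (x : C) => coefs (psi (Gs1 ++ Gs2) e) u *: x) X Y) => /= E.
rewrite coefs_Phi E /T.
apply: eq_big_seq => p hp; apply: eq_bigr => q _; apply: eq_bigr => s _.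
set z := lam k s *: cprod cs s p.2 q.2.
have hsz : size p.1 = size Gs1 by apply/eqP; apply: hX.
transitivity (\sum_(g <- psi Gs2 q.1) \sum_(h <- ex s p.1) \sum_(f <- psi Gs1 h)
   (if f.1 ++ g.1 == u then f.2 else 0) *: (g.2 *: z)).
  apply: eq_bigr => g _; rewrite (Kv _ _ _ hsz) scaler_suml; apply: eq_bigr => h _.
  by rewrite scaler_suml.
rewrite exchange_big; apply: eq_big_seq => h hh /=.
have hh' : size h = size Gs1 by rewrite (size_ex hh).
rewrite (psi_split Gs2 q.1 hh' u) coefs_tprod scaler_suml exchange_big; apply: eq_bigr => g _.
rewrite scaler_suml; apply: eq_bigr => f _.
by case: ifP => _; rewrite ?scale0r // scalerA.
Qed.
End Hom.


Section Tree.
Variables (k : fieldType) (C : lmodType k) (cs : @conformal k C).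

Lemma pprod_mem (A B : tens C) P : P \in pprod cs A B ->
  exists p q s h, [/\ p \in A, q \in B, h \in ex s p.1 & P.1 = h ++ q.1].
Proof.
rewrite /pprod => /flattenP [L /flattenP [L' /allpairsP [[p q] [hp hq ->]]]] /=.
move=> /mapP [s _ ->] /mapP [r]; rewrite act_hs1 => /mapP [h hh ->] -> /=.
by exists p, q, s, h.
Qed.

Lemma teval_size T (as_ : seq C) : size as_ = leaves T ->
  all (fun p => size p.1 == leaves T) (teval cs T (map (@elt k C) as_)).
Proof.
elim: T as_ => [|l IHl r IHr] as_ /=.
  by case: as_ => [|a [|b as_]] //= _; rewrite /elt /= andbT.
move=> hs; apply/allP => P /pprod_mem [p [q [s [h [hp hq hh ->]]]]].
rewrite -map_take -map_drop in hp hq.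
have hl : size (take (leaves l) as_) = leaves l by rewrite size_takel // hs leq_addr.
have hr : size (drop (leaves l) as_) = leaves r by rewrite size_drop hs addKn.
move: (allP (IHl _ hl) _ hp) (allP (IHr _ hr) _ hq) => /eqP h1 /eqP h2.
by rewrite size_cat (size_ex hh) h1 h2.
Qed.

Lemma teval_hom T (ga : seq (seq (k * seq nat) * C)) : size ga = leaves T ->
  eqv (teval cs T [seq gtens x.1 x.2 | x <- ga])
      (Phi (map fst ga) (teval cs T [seq elt x.2 | x <- ga])).
Proof.
elim: T ga => [|l IHl r IHr] ga /=.
  case: ga => [|[G a] [|y ga]] //= _ u.
  rewrite coefs_Phi /elt big_cons big_nil addr0 /= coefs_tprod /gk big_map coefsE big_map.
  rewrite scaler_suml; apply: eq_bigr => p _ /=.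
  rewrite big_cons big_nil addr0 cats0.
  by case: ifP => _ //=; rewrite ?scale0r // -[RHS]/((p.1 * 1) *: a) mulr1.
move=> hs.
have hl : size (take (leaves l) ga) = leaves l by rewrite size_takel // hs leq_addr.
have hr : size (drop (leaves l) ga) = leaves r by rewrite size_drop hs addKn.
rewrite -!map_take -!map_drop.
apply: eqv_trans (pprod_eqvl _ _ (IHl _ hl)) _.
apply: eqv_trans (pprod_eqvr _ _ (IHr _ hr)) _.
have -> : [seq i.1 | i <- ga] = map fst (take (leaves l) ga) ++ map fst (drop (leaves l) ga).
  by rewrite -map_cat cat_take_drop.
apply: pprod_hom.
rewrite size_map hl.
have := @teval_size l (map snd (take (leaves l) ga)); rewrite size_map -map_comp.
by apply.
Qed.
End Tree.


Lemma size_blocks ls (u : seq nat) : size (blocks ls u) = size ls.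
Proof. by elim: ls u => //= l ls IH u; rewrite IH. Qed.

Lemma flatten_blocks ls (u : seq nat) : size u = sumn ls -> flatten (blocks ls u) = u.
Proof.
elim: ls u => [|l ls IH] u /=; first by case: u.
by move=> h; rewrite IH ?cat_take_drop // size_drop h addKn.
Qed.

Lemma blocks_flatten (Bs : seq (seq nat)) : blocks (map size Bs) (flatten Bs) = Bs.
Proof.
elim: Bs => //= B Bs IH.
by rewrite take_size_cat // drop_size_cat // IH.
Qed.

Lemma nth_blocks_size ls (u : seq nat) i : size u = sumn ls -> (i < size ls)%N ->
  size (nth [::] (blocks ls u) i) = nth 0%N ls i.
Proof.
elim: ls u i => [|l ls IH] u [|i] //= h hi.
  by rewrite size_takel // h leq_addr.
by apply: IH => //; rewrite size_drop h addKn.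
Qed.

Lemma nth_enum_map (T : Type) n (x0 : T) (f : 'I_n -> T) (i : 'I_n) :
  nth x0 [seq f j | j <- enum 'I_n] i = f i.
Proof.
by rewrite (nth_map i) ?size_enum_ord ?ltn_ord // nth_ord_enum.
Qed.

Lemma map_nth_enum (T : Type) (x0 : T) (s : seq T) n : size s = n ->
  [seq nth x0 s (nat_of_ord j) | j <- enum 'I_n] = s.
Proof.
move=> hs.
have -> : [seq nth x0 s (nat_of_ord j) | j <- enum 'I_n] = map (nth x0 s) (map val (enum 'I_n)).
  by rewrite -map_comp.
by rewrite val_enum_ord -hs -/(mkseq _ _) mkseq_nth.
Qed.

Section S1.
Variable k : fieldType.

Definition gshape (Gs : seq (seq (k * seq nat))) (ls : seq nat) :=
  all2 (fun G l => all (fun p => size p.2 == l) G) Gs ls.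

Lemma size_iter_actD (V : lmodType k) (P : tens V) l s :
  all (fun p => size p.1 == l) P -> all (fun p => size p.1 == l) (iter s (@actD k V) P).
Proof.
move=> /allP hP; rewrite iter_actD_ex; apply/allP => x /flattenP [L /mapP [f hf ->]].
by move=> /mapP [h hh ->] /=; rewrite (size_ex hh); apply: hP.
Qed.

Lemma size_gk (G : seq (k * seq nat)) l : all (fun p => size p.2 == l) G -> all (fun p => size p.1 == l) (gk G).
Proof. by rewrite /gk all_map. Qed.

Lemma size_psi (Gs : seq (seq (k * seq nat))) ls e : gshape Gs ls ->
  all (fun f => size f.1 == sumn ls) (psi Gs e).
Proof.
elim: Gs ls e => [|G Gs IH] [|l ls] e //=.
move=> /andP [hG hGs]; apply/allP => x /allpairsP [[f g] [hf hg ->]] /=.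
rewrite size_cat (eqP (allP (size_iter_actD (head 0%N e) (size_gk hG)) _ hf)).
by rewrite (eqP (allP (IH _ (behead e) hGs) _ hg)).
Qed.

Lemma coefs_tprod_sz (V : lmodType k) (P : tens k^o) (Q : tens V) l1 l2 u :
  all (fun p => size p.1 == l1) P -> all (fun q => size q.1 == l2) Q ->
  coefs (tprod P Q) u =
  if size u == (l1 + l2)%N then coefs P (take l1 u) *: coefs Q (drop l1 u) else 0.
Proof.
move=> /allP hP /allP hQ; rewrite coefs_tprod.
case: eqP => hu.
- rewrite !coefsE scaler_suml; apply: eq_big_seq => p hp.
  rewrite scaler_sumr; apply: eq_big_seq => q hq.
  have hp1 : size p.1 = size (take l1 u) by rewrite size_takel ?hu ?leq_addr // (eqP (hP _ hp)).
  rewrite -{1}(cat_take_drop l1 u) eqseq_cat //.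
  by case: (p.1 == _); case: (q.1 == _); rewrite /= ?scale0r ?scaler0.
- apply: big1_seq => p /andP [_ hp]; apply: big1_seq => q /andP [_ hq].
  case: eqP => // he; exfalso; apply: hu; rewrite -he size_cat.
  by rewrite (eqP (hP _ hp)) (eqP (hQ _ hq)).
Qed.

Definition Qi (Gs : seq (seq (k * seq nat))) (e : seq nat) (i : nat) : tens k^o :=
  iter (nth 0%N e i) (@actD k k^o) (gk (nth [::] Gs i)).

Lemma coefs_psi (Gs : seq (seq (k * seq nat))) ls e u : gshape Gs ls -> size e = size Gs ->
  coefs (psi Gs e) u =
  if size u == sumn ls then \prod_(0 <= i < size Gs) coefs (Qi Gs e i) (nth [::] (blocks ls u) i)
  else 0.
Proof.
elim: Gs ls e u => [|G Gs IH] [|l ls] [|e0 e] u //=.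
  move=> _ _; rewrite big_nil coefsE big_cons big_nil addr0 /=.
  by case: u.
move=> /andP [hG hGs] [he].
rewrite (coefs_tprod_sz (l1 := l) (l2 := sumn ls) _ (size_iter_actD _ (size_gk hG)) (size_psi _ hGs)).
rewrite (IH ls e) // size_drop; case: eqP => hu.
- by rewrite hu addKn eqxx big_nat_recl.
- by [].
Qed.
End S1.


Section Perm.
Variable n : nat.

Definition bperm (s : 'S_n) (L : seq nat) (v : seq nat) : seq nat :=
  flatten [seq nth [::] (blocks L v) ((s^-1)%g j) | j <- enum 'I_n].

Lemma size_Bs (s : 'S_n) (l : 'I_n -> nat) v :
  size v = sumn [seq l i | i <- enum 'I_n] ->
  map size [seq nth [::] (blocks [seq l i | i <- enum 'I_n] v) ((s^-1)%g j) | j <- enum 'I_n]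
  = [seq l ((s^-1)%g j) | j <- enum 'I_n].
Proof.
move=> hv; rewrite -map_comp; apply: eq_map => j /=.
by rewrite nth_blocks_size ?nth_enum_map // size_map size_enum_ord ltn_ord.
Qed.

Lemma blocks_bperm (s : 'S_n) (l : 'I_n -> nat) v :
  size v = sumn [seq l i | i <- enum 'I_n] ->
  blocks [seq l ((s^-1)%g j) | j <- enum 'I_n] (bperm s [seq l i | i <- enum 'I_n] v)
  = [seq nth [::] (blocks [seq l i | i <- enum 'I_n] v) ((s^-1)%g j) | j <- enum 'I_n].
Proof. by move=> hv; rewrite /bperm -(size_Bs s hv) blocks_flatten. Qed.

Lemma size_bperm (s : 'S_n) (l : 'I_n -> nat) v :
  size v = sumn [seq l i | i <- enum 'I_n] ->
  size (bperm s [seq l i | i <- enum 'I_n] v) = sumn [seq l ((s^-1)%g j) | j <- enum 'I_n].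
Proof. by move=> hv; rewrite /bperm size_flatten /shape (size_Bs s hv). Qed.

Lemma bperm_inv (s : 'S_n) (l : 'I_n -> nat) v :
  size v = sumn [seq l i | i <- enum 'I_n] ->
  bperm (s^-1)%g [seq l ((s^-1)%g j) | j <- enum 'I_n] (bperm s [seq l i | i <- enum 'I_n] v) = v.
Proof.
move=> hv; rewrite {1}/bperm blocks_bperm //.
under eq_map do rewrite nth_enum_map invgK permK.
rewrite (@map_nth_enum _ [::] (blocks [seq l i | i <- enum 'I_n] v) n); last by rewrite size_blocks size_map size_enum_ord.
exact: flatten_blocks.
Qed.

End Perm.

Lemma gshape_enum (k : fieldType) n (F : 'I_n -> seq (k * seq nat)) (l : 'I_n -> nat) :
  (forall i, all (fun p => size p.2 == l i) (F i)) ->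
  gshape [seq F i | i <- enum 'I_n] [seq l i | i <- enum 'I_n].
Proof. by move=> h; rewrite /gshape; elim: (enum 'I_n) => //= i s ->; rewrite h. Qed.

Section PermHom.
Variables (k : fieldType) (V : lmodType k) (n : nat).

Lemma perm_hom (s : 'S_n) (m : 'I_n -> nat) (G : 'I_n -> seq (k * seq nat))
  (hG : forall i, all (fun p => size p.2 == m i) (G i)) (e : seq nat) (c : V) :
  size e = n ->
  eqv (act_sigma_pi m s (sc (psi [seq G (s i) | i <- enum 'I_n] e) c))
      (sc (psi [seq G i | i <- enum 'I_n] [seq nth 0%N e ((s^-1)%g j) | j <- enum 'I_n]) c).
Proof.
move=> he u.
set L := [seq m i | i <- enum 'I_n].
set Ls := [seq m (s i) | i <- enum 'I_n].
have shs : gshape [seq G (s i) | i <- enum 'I_n] Ls by apply: (gshape_enum (F := fun i => G (s i))).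
have sh : gshape [seq G i | i <- enum 'I_n] L by apply: gshape_enum.
have hLs : [seq m (s ((s^-1)%g j)) | j <- enum 'I_n] = L by apply: eq_map => j; rewrite permKV.
have hL : [seq m ((s^-1)^-1%g j) | j <- enum 'I_n] = Ls by apply: eq_map => j; rewrite invgK.
rewrite coefs_sc /act_sigma_pi /sc -map_comp coefsE big_map /=.
have szf := allP (size_psi e shs).
case hu : (size u == sumn L).
- set v0 := bperm (s^-1)%g L u.
  have hv0 : size v0 = sumn Ls by rewrite -hL size_bperm //; apply/eqP.
  transitivity (\sum_(f <- psi [seq G (s i) | i <- enum 'I_n] e) (if f.1 == v0 then f.2 else 0) *: c).
    apply: eq_big_seq => f hf /=.
    have hf1 : size f.1 = sumn Ls by apply/eqP/szf.
    have -> : (flatten [seq nth [::] (blocks Ls f.1) ((s^-1)%g j) | j <- enum 'I_n] == u) = (f.1 == v0).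
      apply/eqP/eqP => H.
      + rewrite /v0 -H -hLs.
        by rewrite (@bperm_inv n s (fun i => m (s i)) f.1 hf1).
      + rewrite H /v0; move: (@bperm_inv n (s^-1)%g m u (eqP hu)); rewrite invgK; exact.
    by case: ifP; rewrite ?scale0r.
  rewrite -scaler_suml -coefsE; congr (_ *: _).
  rewrite (coefs_psi v0 shs); last by rewrite size_map size_enum_ord.
  rewrite (coefs_psi u sh); last by rewrite !size_map.
  rewrite hu hv0 eqxx !size_map -enumT size_enum_ord !big_mkord.
  rewrite [RHS](reindex_inj (@perm_inj _ s)) /=; apply: eq_bigr => i _.
  rewrite /Qi !nth_enum_map permK.
  rewrite /v0 -hL blocks_bperm; last by apply/eqP.
  by rewrite nth_enum_map invgK.
- rewrite (coefs_psi u sh); last by rewrite !size_map.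
  rewrite hu scale0r.
  apply: big1_seq => f /andP [_ hf]; case: eqP => // hfu; exfalso.
  have hf1 : size f.1 = sumn Ls by apply/eqP/szf.
  move: hu; rewrite -hfu -hLs.
  by rewrite (@size_bperm n s (fun i => m (s i)) f.1 hf1) eqxx.
Qed.
End PermHom.


Section Final.
Variables (k : fieldType) (C : lmodType k) (cs : @conformal k C).

Lemma rel_flat (L : tens C) :
  eqv (flatten (map (rel_gen cs) L)) (actD L ++ [seq (p.1, - cD cs p.2) | p <- L]).
Proof.
move=> e; rewrite coefs_flatten big_map coefs_cat coefs_actD coefsE big_map -big_split.
apply: eq_bigr => p _ /=; rewrite /rel_gen coefs_cat !coefsE big_map big_cons big_nil addr0.
by [].
Qed.

Lemma Phi_rel (Gs : seq (seq (k * seq nat))) (r : tens C) :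
  all (fun p => size p.1 == size Gs) r ->
  eqv (Phi Gs (flatten (map (rel_gen cs) r))) (flatten (map (rel_gen cs) (Phi Gs r))).
Proof.
move=> hr.
apply: eqv_trans (Phi_eqv Gs (rel_flat r)) _.
apply: eqv_trans _ (eqv_sym (rel_flat _)).
rewrite Phi_cat; apply: eqv_cat; first exact: eqv_sym (Phi_actD hr).
move=> u; congr (coefs _ u).
rewrite /Phi map_flatten -!map_comp; congr flatten; apply: eq_map => p /=.
rewrite /sc -map_comp; apply: eq_map => f /=.
by rewrite cD_scale scalerN.
Qed.

Lemma remap_eqv (V : lmodType k) (g : seq nat -> seq nat) (t u : tens V) :
  eqv t u -> eqv [seq (g p.1, p.2) | p <- t] [seq (g p.1, p.2) | p <- u].
Proof.
move=> h e; rewrite !coefsE !big_map /=.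
apply: (int_eqv (F := fun f x => if g f == e then x else 0)) => //.
- by move=> f; case: ifP.
- by move=> f x y; case: ifP => //; rewrite addr0.
Qed.

Lemma coefs_tscale (V : lmodType k) c (w : tens V) e : coefs (tscale c w) e = c *: coefs w e.
Proof.
rewrite !coefsE big_map scaler_sumr; apply: eq_bigr => p _ /=.
by case: ifP; rewrite ?scaler0.
Qed.

Lemma tscale_eqv (V : lmodType k) c (t u : tens V) : eqv t u -> eqv (tscale c t) (tscale c u).
Proof. by move=> h e; rewrite !coefs_tscale h. Qed.

Lemma Phi_tscale (Gs : seq (seq (k * seq nat))) c (t : tens C) :
  eqv (Phi Gs (tscale c t)) (tscale c (Phi Gs t)).
Proof.
move=> e; rewrite coefs_tscale !coefs_Phi /tscale big_map scaler_sumr.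
by apply: eq_bigr => p _ /=; rewrite !scalerA mulrC.
Qed.
End Final.


Lemma eqv_flatten_all (k : fieldType) (V : lmodType k) (I : Type) (s : seq I) (P : pred I)
  (f g : I -> tens V) :
  all P s -> (forall i, P i -> eqv (f i) (g i)) -> eqv (flatten (map f s)) (flatten (map g s)).
Proof.
move=> hs h; elim: s hs => //= i s IH /andP [hi hs].
by apply: eqv_cat; [apply: h | apply: IH].
Qed.

Section Maps.
Variables (k : fieldType) (C : lmodType k) (n : nat).
Implicit Types (X : tens C) (s : 'S_n) (m : 'I_n -> nat).

Lemma asp_tscale m s c X : act_sigma_pi m s (tscale c X) = tscale c (act_sigma_pi m s X).
Proof. by rewrite /act_sigma_pi /tscale -!map_comp. Qed.
Lemma ap_tscale s c X : act_perm s (tscale c X) = tscale c (act_perm s X).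
Proof. by rewrite /act_perm /tscale -!map_comp. Qed.
Lemma asp_flatten m s (L : seq (tens C)) :
  act_sigma_pi m s (flatten L) = flatten (map (act_sigma_pi m s) L).
Proof. by rewrite /act_sigma_pi map_flatten. Qed.
Lemma ap_flatten s (L : seq (tens C)) :
  act_perm s (flatten L) = flatten (map (act_perm s) L).
Proof. by rewrite /act_perm map_flatten. Qed.
Lemma asp_eqv m s X Y : eqv X Y -> eqv (act_sigma_pi m s X) (act_sigma_pi m s Y).
Proof. by move=> h; rewrite /act_sigma_pi; exact: (@remap_eqv _ _ (fun v => flatten [seq nth [::] (blocks [seq m (s i) | i <- enum 'I_n] v) ((s^-1)%g j) | j <- enum 'I_n]) X Y h). Qed.
End Maps.

Unset Implicit Arguments.
Theorem proposition3p3 (k : fieldType) (hk : [pchar k] =i pred0)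
  (C : lmodType k) (cs : @conformal k C) (n : nat)
  (t : 'S_n -> seq (k * btree))
  (ht : forall s : 'S_n, all (fun p => leaves p.2 == n) (t s))
  (hid : forall a : 'I_n -> C,
     tz cs n (flatten [seq act_perm s
                (lceval cs (t s) [seq elt (a (s i)) | i <- enum 'I_n]) | s : 'S_n]))
  (m : 'I_n -> nat) (hm : forall i, (0 < m i)%N)
  (G : 'I_n -> seq (k * seq nat))
  (hG : forall i, all (fun p => size p.2 == m i) (G i))
  (a : 'I_n -> C) :
  let A := fun i => gtens (G i) (a i) in
  tz cs (\sum_(i < n) m i)%N
    (flatten [seq act_sigma_pi m s
                (lceval cs (t s) [seq A (s i) | i <- enum 'I_n]) | s : 'S_n]).
Proof.
move=> A; case: (hid a) => r [hr hZ].
set Gs := [seq G i | i <- enum 'I_n].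
have sh : gshape Gs [seq m i | i <- enum 'I_n] by apply: gshape_enum.
have hsum : sumn [seq m i | i <- enum 'I_n] = (\sum_(i < n) m i)%N.
  by rewrite sumnE big_map big_enum.
have hGs : size Gs = n by rewrite size_map size_enum_ord.
exists (Phi Gs r); split.
  apply/allP => x /flattenP [L /mapP [p hp ->]] /mapP [f hf ->] /=.
  by rewrite -hsum; apply: (allP (size_psi p.1 sh)).
have hr' : all (fun p => size p.1 == size Gs) r by rewrite hGs.
apply: eqv_trans _ (Phi_rel cs hr').
apply: eqv_trans _ (Phi_eqv Gs hZ).
rewrite Phi_flatten -map_comp; apply: eqv_flatten => s /=.
rewrite /lceval asp_flatten ap_flatten Phi_flatten.
rewrite -[map (act_sigma_pi m s) _]map_comp -[map (act_perm s) _]map_comp -[map (Phi Gs) _]map_comp.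
apply: (eqv_flatten_all (P := fun p : k * btree => leaves p.2 == n)) (ht s) _ => -[c T] /= /eqP hT.
rewrite asp_tscale ap_tscale.
apply: eqv_trans _ (eqv_sym (Phi_tscale _ _ _)); apply: tscale_eqv.
set ga := [seq (G (s i), a (s i)) | i <- enum 'I_n].
have hga : size ga = leaves T by rewrite size_map size_enum_ord hT.
have E1 : [seq A (s i) | i <- enum 'I_n] = [seq gtens x.1 x.2 | x <- ga] by rewrite /ga -map_comp.
have E2 : [seq elt (a (s i)) | i <- enum 'I_n] = [seq elt x.2 | x <- ga] by rewrite /ga -map_comp.
have E3 : map fst ga = [seq G (s i) | i <- enum 'I_n] by rewrite /ga -map_comp.
rewrite E1 E2.
apply: eqv_trans (asp_eqv _ _ (teval_hom cs hga)) _.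
rewrite E3.
have hX := @teval_size _ _ cs T (map snd ga); rewrite size_map hga -map_comp in hX.
move/allP: (hX erefl) => hX'.
set Gss := [seq G (s i) | i <- enum 'I_n]. set X := teval cs T _.
move: hX'; rewrite -/X => hX'.
rewrite /Phi asp_flatten /act_perm -!map_comp; apply: eqv_flatten_in => q hq /=.
apply: perm_hom => //; rewrite -hT; exact/eqP/hX'.
Qed.
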